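(* Let $A$ be a meet-semilattice and $\kappa$ a regular cardinal. The following are equivalent: (1) every $\kappa$-join in $\mathcal{DM} A$ is distributive; (2) $\mathcal{DM} A$ is a $\kappa$-frame; (3) $\mathcal{BL}_\kappa(\mathcal{DM} A)=\mathcal{DM} A$.
   Context: A meet-semilattice is a poset with all finite meets. $\mathcal{DM} A$ is the complete lattice of normal ideals of $A$ (downsets $N$ with $N=N^{u\ell}$, where ${}^u,{}^\ell$ denote upper and lower bounds). An existing join $\bigvee S$ is distributive if $a\wedge\bigvee S=\bigvee\{a\wedge s:s\in S\}$ for all $a$. A D-ideal is a downset containing $\bigvee S$ for each subset $S$ of it with distributive join; $\mathcal{BL} A$ is the frame of D-ideals, and every normal ideal is a D-ideal, so $\mathcal{DM} A\subseteq\mathcal{BL} A$ (with $\mathcal{BL}(\mathcal{DM} A)$ identified with $\mathcal{BL} A$). A $\kappa$-join is a join of fewer than $\kappa$ elements; a $\kappa$-frame is a meet-semilattice in which all $\kappa$-joins exist and are distributive. $\mathcal{BL}_\kappa(\mathcal{DM} A)$ denotes the sub-$\kappa$-frame of $\mathcal{BL} A$ generated by $\mathcal{DM} A$ (closure of $\mathcal{DM} A$ under finite meets and $\kappa$-joins computed in $\mathcal{BL} A$). *)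

(* Defs.v *)
From mathcomp Require Import all_boot all_order.
Set Implicit Arguments. Unset Strict Implicit. Unset Printing Implicit Defensive.
Import Order.Theory.

Definition card_lt (X K : Type) : Prop :=
  (exists f : X -> K, injective f) /\ ~ (exists g : K -> X, injective g).

(* a subset S of X has fewer than kappa = |K| elements *)
Definition lt_kappa (K : Type) (X : Type) (S : X -> Prop) : Prop :=
  card_lt {x : X | S x} K.

(* kappa = |K| is a regular (infinite) cardinal: not a sum of fewer than
   kappa cardinals each smaller than kappa *)
Definition regular_cardinal (K : Type) : Prop :=
  (exists f : nat -> K, injective f) /\
  forall (I : Type) (F : I -> Type),
    card_lt I K -> (forall i, card_lt (F i) K) -> card_lt {i : I & F i} K.

Section Generic.
Variables (X : Type) (D : X -> Prop) (le : X -> X -> Prop).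

Definition is_lub (S : X -> Prop) (x : X) : Prop :=
  D x /\ (forall s, S s -> le s x) /\
  (forall y, D y -> (forall s, S s -> le s y) -> le x y).

Definition is_glb (S : X -> Prop) (x : X) : Prop :=
  D x /\ (forall s, S s -> le x s) /\
  (forall y, D y -> (forall s, S s -> le y s) -> le y x).

Definition is_meet (a b m : X) : Prop := is_glb (fun z => z = a \/ z = b) m.

Definition dist_join (S : X -> Prop) (j : X) : Prop :=
  is_lub S j /\
  forall a m, D a -> is_meet a j m ->
    is_lub (fun z => exists2 s, S s & is_meet a s z) m.

Definition kappa_frame (K : Type) : Prop :=
  (exists t, is_glb (fun _ => False) t) /\
  (forall a b, D a -> D b -> exists m, is_meet a b m) /\
  (forall S, (forall s, S s -> D s) -> lt_kappa K S -> exists j, dist_join S j).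

End Generic.

Section Ideals.
Context {d : Order.disp_t} {A : tMeetSemilatticeType d}.

Definition leA (x y : A) : Prop := (x <= y)%O.
Definition fullA (_ : A) : Prop := True.

Definition subsetA (N M : A -> Prop) : Prop := forall x, N x -> M x.

Definition ubs (N : A -> Prop) : A -> Prop := fun x => forall y, N y -> (y <= x)%O.
Definition lbs (N : A -> Prop) : A -> Prop := fun x => forall y, N y -> (x <= y)%O.

Definition downset (N : A -> Prop) : Prop := forall x y, (x <= y)%O -> N y -> N x.

(* normal ideals: N = N^{ul};  DM A *)
Definition normal_ideal (N : A -> Prop) : Prop :=
  downset N /\ forall x, N x <-> lbs (ubs N) x.

(* D-ideals; BL A *)
Definition D_ideal (I : A -> Prop) : Prop :=
  downset I /\
  forall (S : A -> Prop) (j : A), (forall s, S s -> I s) ->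
    dist_join fullA leA S j -> I j.

Definition sub_kappa_frame_BL (K : Type) (C : (A -> Prop) -> Prop) : Prop :=
  (forall N, C N -> D_ideal N) /\
  (forall t, is_glb D_ideal subsetA (fun _ => False) t -> C t) /\
  (forall a b m, C a -> C b -> is_meet D_ideal subsetA a b m -> C m) /\
  (forall S, (forall s, S s -> C s) -> lt_kappa K S ->
     forall j, is_lub D_ideal subsetA S j -> C j).

Definition BL_kappa_DM (K : Type) (N : A -> Prop) : Prop :=
  forall C, sub_kappa_frame_BL K C -> (forall M, normal_ideal M -> C M) -> C N.

End Ideals.

(* Main.v *)
Require Import Defs.
From mathcomp Require Import all_boot all_order.
Set Implicit Arguments. Unset Strict Implicit.
Import Order.Theory.
Local Open Scope order_scope.

Lemma is_lub_ext (X : Type) (D : X -> Prop) (le : X -> X -> Prop) (P Q : X -> Prop) j :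
  (forall z, P z <-> Q z) -> is_lub D le P j -> is_lub D le Q j.
Proof.
move=> H [Dj [ub l]]; split=> //; split.
- move=> s Qs; apply: ub; exact/H.
- move=> y Dy Hy; apply: (l y Dy) => s Ps; apply: Hy; exact/H.
Qed.

Lemma meetAE d (A : tMeetSemilatticeType d) (a b m : A) :
  is_meet fullA leA a b m <-> m = a `&` b.
Proof.
split.
- move=> [_ [lb gr]]. apply/le_anti/andP; split.
  + rewrite lexI; apply/andP; split; apply: lb; by [left|right].
  + apply: gr => // z [->|->]; [exact: leIl|exact: leIr].
- move=> ->; split=> //; split.
  + move=> z [->|->]; [exact: leIl|exact: leIr].
  + move=> y _ H; rewrite /leA lexI.
    have h1 := H a (or_introl erefl); have h2 := H b (or_intror erefl).
    by rewrite /leA in h1 h2; rewrite h1 h2.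
Qed.

Lemma sub_ul d (A : tMeetSemilatticeType d) (X : A -> Prop) x :
  X x -> lbs (ubs X) x.
Proof. by move=> Xx u Hu; apply: Hu. Qed.

Lemma ul_normal d (A : tMeetSemilatticeType d) (X : A -> Prop) :
  normal_ideal (lbs (ubs X)).
Proof.
split.
- move=> x y xy Hy u Hu; exact: le_trans xy (Hy u Hu).
- move=> x; split.
  + move=> Hx u Hu; exact: Hu x Hx.
  + move=> Hx u Hu; apply: Hx => y Hy; exact: Hy u Hu.
Qed.

Lemma normal_ext d (A : tMeetSemilatticeType d) (N M : A -> Prop) :
  normal_ideal N -> (forall x, N x <-> M x) -> normal_ideal M.
Proof.
move=> [dn hn] H; split.
- move=> x y xy /H My; apply/H; exact: dn xy My.
- move=> x; split.
  + move=> /H /hn Hx u Hu; apply: Hx => y Ny; apply: Hu; exact/H.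
  + move=> Hx; apply/H/hn => u Hu; apply: Hx => y My; apply: Hu; exact/H.
Qed.

Lemma down_normal d (A : tMeetSemilatticeType d) (z : A) :
  normal_ideal (fun x => x <= z).
Proof.
split.
- move=> x y xy yz; exact: le_trans xy yz.
- move=> x; split.
  + move=> xz u Hu; exact: le_trans xz (Hu z (lexx z)).
  + move=> Hx; apply: Hx => y; done.
Qed.

Lemma inter_normal d (A : tMeetSemilatticeType d) (N M : A -> Prop) :
  normal_ideal N -> normal_ideal M -> normal_ideal (fun x => N x /\ M x).
Proof.
move=> [dn hn] [dm hm]; split.
- move=> x y xy [Ny My]; split; [exact: dn xy Ny|exact: dm xy My].
- move=> x; split; first exact: sub_ul.
  move=> Hx; split.
  + apply/hn => u Hu; apply: Hx => y [Ny _]; exact: Hu.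
  + apply/hm => u Hu; apply: Hx => y [_ My]; exact: Hu.
Qed.

Lemma full_normal d (A : tMeetSemilatticeType d) :
  normal_ideal (fun _ : A => True).
Proof. split; first by []. move=> x; split=> // _ u Hu; exact: Hu x I. Qed.

Lemma normal_D d (A : tMeetSemilatticeType d) (N : A -> Prop) :
  normal_ideal N -> D_ideal N.
Proof.
move=> [dn hn]; split=> // T j HT [[_ [_ lj]] _].
apply/hn => u Hu; apply: lj => // s Ts; exact: Hu s (HT s Ts).
Qed.

Lemma DM_lub d (A : tMeetSemilatticeType d) (S : (A -> Prop) -> Prop) :
  (forall s, S s -> normal_ideal s) ->
  is_lub normal_ideal subsetA S (lbs (ubs (fun x => exists2 s, S s & s x))).
Proof.
move=> HS; split; first exact: ul_normal.
split.
- move=> s Ss x sx; apply: sub_ul; by exists s.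
- move=> y Ny Hy x Hx. apply/(Ny.2) => u Hu; apply: Hx => w [s Ss sw].
  apply: Hu; exact: Hy s Ss w sw.
Qed.

Lemma key d (A : tMeetSemilatticeType d) (S : (A -> Prop) -> Prop) (J I : A -> Prop) :
  (forall s, S s -> normal_ideal s) ->
  dist_join normal_ideal subsetA S J ->
  D_ideal I -> (forall s, S s -> subsetA s I) -> subsetA J I.
Proof.
move=> HS [[NJ [ubJ lJ]] dist] [dI cI] HI.
have P : forall z, J z -> forall u,
    (forall y, y <= z -> (exists2 s, S s & s y) -> y <= u) -> z <= u.
  move=> z Jz u Hu.
  have Hm : is_meet normal_ideal subsetA (fun x => x <= z) J (fun x => x <= z).
    split; first exact: down_normal. split.
    - move=> w [->|->]; first by [].
      move=> x xz; exact: (NJ.1) xz Jz.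
    - move=> y _ H; apply: H; by left.
  have [_ [_ L]] := dist _ _ (down_normal z) Hm.
  have := L (lbs (ubs (fun y => y <= z /\ exists2 s, S s & s y))) (ul_normal _).
  have H1 : forall Z, (exists2 s, S s & is_meet normal_ideal subsetA (fun x => x <= z) s Z) ->
      subsetA Z (lbs (ubs (fun y => y <= z /\ exists2 s, S s & s y))).
    move=> Z [s Ss [_ [lb _]]] w Zw. apply: sub_ul. split.
    - exact: lb _ (or_introl erefl) w Zw.
    - exists s => //. exact: lb _ (or_intror erefl) w Zw.
  move=> /(_ H1) /(_ z (lexx z)); apply => y [yz ex]; exact: Hu.
move=> x Jx.
apply: (cI (fun y => y <= x /\ exists2 s, S s & s y) x).
  move=> y [_ [s Ss sy]]; exact: HI s Ss y sy.
split.
- split=> //; split.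
  + by move=> s [sx _].
  + move=> y _ Hy; apply: P => // y' yx ex; apply: Hy; by split.
- move=> a m _ /meetAE ->.
  split=> //; split.
  + move=> w [t [tx _] /meetAE ->]. rewrite /leA lexI leIl /=.
    exact: le_trans (leIr _ _) tx.
  + move=> u _ Hu. apply: P.
      exact: (NJ.1) _ _ (leIr _ _) Jx.
    move=> y ya ex. apply: Hu. exists y.
      split=> //; exact: le_trans ya (leIr _ _).
    apply/meetAE; apply/esym/meet_idPr.
    exact: le_trans ya (leIl _ _).
Qed.

Lemma c1c3 d (A : tMeetSemilatticeType d) (K : Type)
  (H1 : forall S : (A -> Prop) -> Prop,
      (forall s, S s -> normal_ideal s) -> lt_kappa K S ->
      forall j, is_lub normal_ideal subsetA S j -> dist_join normal_ideal subsetA S j)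
  (N : A -> Prop) : BL_kappa_DM K N -> normal_ideal N.
Proof.
move=> HN; apply: HN; last by [].
split; first exact: normal_D.
split.
  move=> t [Dt [_ gt]]. apply: (normal_ext (@full_normal d A)).
  move=> x; split=> // _.
  have fD : D_ideal (fun _ : A => True) by split.
  exact: (gt (fun _ => True) fD (fun s (f : False) => False_ind _ f) x I).
split.
  move=> a b m Na Nb [Dm [lbm grm]].
  apply: (normal_ext (inter_normal Na Nb)) => x; split.
  - apply: (grm (fun x => a x /\ b x)); first exact: normal_D (inter_normal Na Nb).
    by move=> z [->|->] y [].
  - move=> mx; split; [exact: lbm _ (or_introl erefl) x mx|exact: lbm _ (or_intror erefl) x mx].
move=> S HS Hk j [Dj [ubj lj]].
have HJ := DM_lub HS.
have dist := H1 S HS Hk _ HJ.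
have Jj := key HS dist Dj ubj.
have jJ := lj _ (normal_D HJ.1) HJ.2.1.
apply: (normal_ext HJ.1) => x; split; [exact: Jj|exact: jJ].
Qed.

Lemma c3c1 d (A : tMeetSemilatticeType d) (K : Type)
  (H3 : forall N : A -> Prop, BL_kappa_DM K N -> normal_ideal N)
  (S : (A -> Prop) -> Prop) (HS : forall s, S s -> normal_ideal s) (Hk : lt_kappa K S)
  j (Hj : is_lub normal_ideal subsetA S j) : dist_join normal_ideal subsetA S j.
Proof.
pose jb := fun x => forall I, D_ideal I -> (forall s, S s -> subsetA s I) -> I x.
have jbD : D_ideal jb.
  split.
  - move=> x y xy jy I DI HI. exact: DI.1 _ _ xy (jy I DI HI).
  - move=> T t HT Ht I DI HI. apply: DI.2 Ht => s Ts. exact: HT s Ts I DI HI.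
have jblub : is_lub D_ideal subsetA S jb.
  split=> //; split.
  - move=> s Ss x sx I DI HI; exact: HI s Ss x sx.
  - move=> y Dy Hy x jx; exact: jx y Dy Hy.
have jbN : normal_ideal jb.
  apply: H3 => C [_ [_ [_ HC]]] HDM. apply: HC jblub => //.
  move=> s Ss; apply: HDM; exact: HS.
have [Nj [ubj lj]] := Hj.
have jjb : subsetA j jb := lj jb jbN (jblub.2.1).
split=> // a m Na [Nm [lbm grm]].
split=> //; split.
- move=> Z [s Ss [NZ [lbZ _]]]. apply: grm NZ _ => w [->|->].
    exact: lbZ _ (or_introl erefl).
  move=> x Zx; exact: (ubj s Ss x (lbZ s (or_intror erefl) x Zx)).
- move=> Y NY HY.
  pose H := fun x => forall y, a y -> Y (y `&` x).
  have [dY cY] := normal_D NY.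
  have HD : D_ideal H.
    split.
    + move=> x x' xx' Hx' y ay. apply: dY (Hx' y ay).
      exact: leI2 (lexx y) xx'.
    + move=> T t HT Ht y ay.
      apply: (cY (fun w => exists2 t', T t' & is_meet fullA leA y t' w)).
        move=> w [t' Tt' /meetAE ->]; exact: HT t' Tt' y ay.
      split.
      * exact: Ht.2 y _ I (proj2 (meetAE _ _ _) erefl).
      * move=> b m' _ /meetAE ->.
        have := Ht.2 (b `&` y) _ I (proj2 (meetAE _ _ _) erefl).
        rewrite meetA. apply: is_lub_ext => z; split.
        - move=> [t' Tt' /meetAE ->]. exists (y `&` t').
            exists t' => //; exact/meetAE.
          apply/meetAE; by rewrite meetA.
        - move=> [w' [t' Tt' /meetAE ->] /meetAE ->].
          exists t' => //; apply/meetAE; by rewrite meetA.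
  have sH : forall s, S s -> subsetA s H.
    move=> s Ss x sx y ay. have Ni := inter_normal Na (HS s Ss).
    have : subsetA (fun x => a x /\ s x) Y.
      apply: HY; exists s => //.
      split=> //; split.
      + by move=> z [->|->] w [].
      + move=> y' _ Hy' w yw; split.
        * exact: Hy' _ (or_introl erefl) w yw.
        * exact: Hy' _ (or_intror erefl) w yw.
    apply; split.
    + exact: Na.1 _ _ (leIl _ _) ay.
    + exact: (HS s Ss).1 _ _ (leIr _ _) sx.
  move=> x mx.
  have ax : a x := lbm a (or_introl erefl) x mx.
  have jx : j x := lbm _ (or_intror erefl) x mx.
  have Hx : H x := jjb x jx H HD sH.
  have := Hx x ax. by rewrite meetxx.
Qed.

Theorem theorem4p4 (d : Order.disp_t) (A : tMeetSemilatticeType d) (K : Type)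
  (hK : regular_cardinal K) :
  let DM := @normal_ideal d A in
  let cond1 := forall S : (A -> Prop) -> Prop,
      (forall s, S s -> DM s) -> lt_kappa K S ->
      forall j, is_lub DM subsetA S j -> dist_join DM subsetA S j in
  let cond2 := kappa_frame DM subsetA K in
  let cond3 := forall N : A -> Prop, BL_kappa_DM K N <-> DM N in
  (cond1 <-> cond2) /\ (cond2 <-> cond3).
Proof.
cbv zeta.
have h12 : (forall S : (A -> Prop) -> Prop,
      (forall s, S s -> normal_ideal s) -> lt_kappa K S ->
      forall j, is_lub normal_ideal subsetA S j -> dist_join normal_ideal subsetA S j) ->
      kappa_frame (@normal_ideal d A) subsetA K.
  move=> H1; split.
    exists (fun _ => True); split; first exact: full_normal.
    by split.
  split.
    move=> a b Na Nb; exists (fun x => a x /\ b x); split; first exact: inter_normal.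
    split; first by move=> z [->|->] x [].
    move=> y _ Hy x yx; split; [exact: Hy _ (or_introl erefl) x yx|exact: Hy _ (or_intror erefl) x yx].
  move=> S HS Hk; exists (lbs (ubs (fun x => exists2 s, S s & s x))); apply: H1 => //; exact: DM_lub.
have h21 : kappa_frame (@normal_ideal d A) subsetA K ->
    (forall S : (A -> Prop) -> Prop,
      (forall s, S s -> normal_ideal s) -> lt_kappa K S ->
      forall j, is_lub normal_ideal subsetA S j -> dist_join normal_ideal subsetA S j).
  move=> [_ [_ H2]] S HS Hk j Hj.
  have [j' [Hj' dj']] := H2 S HS Hk.
  have [Nj [ubj lj]] := Hj. have [Nj' [ubj' lj']] := Hj'.
  have jj' := lj _ Nj' ubj'. have j'j := lj' _ Nj ubj.
  split=> // a m Na [Nm [lbm grm]].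
  apply: dj' => //. split=> //; split.
  - move=> z [->|->]; first exact: lbm _ (or_introl erefl).
    move=> x mx; apply: jj'; exact: lbm _ (or_intror erefl) x mx.
  - move=> y Ny Hy; apply: grm => // z [->|->]; first exact: Hy _ (or_introl erefl).
    move=> x yx; apply: j'j; exact: Hy _ (or_intror erefl) x yx.
have h13 := @c1c3 d A K.
have h31 := @c3c1 d A K.
split; split.
- exact: h12.
- exact: h21.
- move=> H2 N; split; first exact: h13 (h21 H2) N.
  move=> HN C _ HC; exact: HC N HN.
- move=> H3; apply: h12 => S HS Hk j Hj; apply: h31 => // N HN; exact: (proj1 (H3 N) HN).
Qed.
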